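(* There exists a countable group $G$ with the following two properties: \begin{itemize} \item for every $m \geq 1$ and every $w \in F_m \setminus [F_m, F_m]$, the word map $w \colon G^m \to G$ is surjective; \item the real vector space $\operatorname{Q}(G)/\operatorname{Hom}(G)$ is infinite-dimensional. \end{itemize}
   Context: $F_m$ denotes the free group of rank $m$ with basis $x_1,\dots,x_m$. An element $w \in F_m$ defines a word map $w \colon G^m \to G$ by substituting $x_i \mapsto g_i$ for $(g_1,\dots,g_m)\in G^m$. A quasimorphism on $G$ is a function $\varphi\colon G\to\mathbb{R}$ with finite defect $D(\varphi)=\sup_{g,h\in G}|\varphi(g)+\varphi(h)-\varphi(gh)|$; it is homogeneous if $\varphi(g^n)=n\varphi(g)$ for all $g\in G$, $n\in\mathbb{Z}$. $\operatorname{Q}(G)$ is the real vector space of homogeneous quasimorphisms on $G$ and $\operatorname{Hom}(G)$ the subspace of homomorphisms $G\to\mathbb{R}$. *)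

(* Defs.v *)
From Stdlib Require Import Reals List Arith ZArith.
Import ListNotations.
Open Scope R_scope.

Record Group := {
  carrier :> Type;
  gmul : carrier -> carrier -> carrier;
  ginv : carrier -> carrier;
  gone : carrier;
  gmul_assoc : forall x y z, gmul x (gmul y z) = gmul (gmul x y) z;
  gmul_1l : forall x, gmul gone x = x;
  gmul_1r : forall x, gmul x gone = x;
  gmul_Vl : forall x, gmul (ginv x) x = gone;
  gmul_Vr : forall x, gmul x (ginv x) = gone }.

Definition countable_group (G : Group) : Prop :=
  exists f : G -> nat, forall x y, f x = f y -> x = y.

(** Words in the free group F_m on x_0,...,x_{m-1}: a letter (i, b) stands for
    x_i if b = true and x_i^{-1} if b = false. *)
Definition letter := (nat * bool)%type.
Definition word := list letter.

Definition word_in (m : nat) (w : word) : Prop :=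
  Forall (fun l : letter => (fst l < m)%nat) w.

Definition linv (l : letter) : letter := (fst l, negb (snd l)).
Definition winv (w : word) : word := rev (map linv w).

Inductive free_eq : word -> word -> Prop :=
| fe_refl : forall w, free_eq w w
| fe_sym : forall u v, free_eq u v -> free_eq v u
| fe_trans : forall u v w, free_eq u v -> free_eq v w -> free_eq u w
| fe_cancel : forall u v a, free_eq (u ++ a :: linv a :: v) (u ++ v).

Definition wcomm (u v : word) : word := winv u ++ winv v ++ u ++ v.

Definition in_commutator_subgroup (m : nat) (w : word) : Prop :=
  exists ps : list (word * word),
    Forall (fun p => word_in m (fst p) /\ word_in m (snd p)) ps /\
    free_eq w (concat (map (fun p => wcomm (fst p) (snd p)) ps)).

(** Word map: evaluation of w at the tuple g (only g 0, ..., g (m-1) matter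
    for w in F_m). *)
Definition eval_letter (G : Group) (g : nat -> G) (l : letter) : G :=
  if snd l then g (fst l) else ginv G (g (fst l)).

Fixpoint eval_word (G : Group) (g : nat -> G) (w : word) : G :=
  match w with
  | [] => gone G
  | l :: w' => gmul G (eval_letter G g l) (eval_word G g w')
  end.

Definition word_map_surjective (G : Group) (m : nat) (w : word) : Prop :=
  forall y : G, exists g : nat -> G, eval_word G g w = y.

Fixpoint gpow_nat (G : Group) (x : G) (n : nat) : G :=
  match n with
  | O => gone G
  | S k => gmul G x (gpow_nat G x k)
  end.

Definition gpow (G : Group) (x : G) (n : Z) : G :=
  match n with
  | Z0 => gone G
  | Zpos p => gpow_nat G x (Pos.to_nat p)
  | Zneg p => ginv G (gpow_nat G x (Pos.to_nat p))
  end.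

Definition quasimorphism (G : Group) (phi : G -> R) : Prop :=
  exists D : R, forall g h : G,
    Rabs (phi g + phi h - phi (gmul G g h)) <= D.

Definition homogeneous (G : Group) (phi : G -> R) : Prop :=
  forall (g : G) (n : Z), phi (gpow G g n) = IZR n * phi g.

Definition homog_quasimorphism (G : Group) (phi : G -> R) : Prop :=
  quasimorphism G phi /\ homogeneous G phi.

Definition hom_to_R (G : Group) (phi : G -> R) : Prop :=
  forall g h : G, phi (gmul G g h) = phi g + phi h.

Fixpoint lin_comb (G : Group) (c : nat -> R) (phis : nat -> G -> R) (n : nat)
  (g : G) : R :=
  match n with
  | O => 0
  | S k => lin_comb G c phis k g + c k * phis k g
  end.

(** Q(G)/Hom(G) is infinite-dimensional: for every n there are n elements of
    Q(G) whose classes modulo Hom(G) are linearly independent. *)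
Definition Q_mod_Hom_infinite_dim (G : Group) : Prop :=
  forall n : nat, exists phis : nat -> G -> R,
    (forall i, (i < n)%nat -> homog_quasimorphism G (phis i)) /\
    (forall c : nat -> R, hom_to_R G (lin_comb G c phis n) ->
       forall i, (i < n)%nat -> c i = 0).

(* Main.v *)
Require Import Defs.
From Stdlib Require Import Reals List Arith ZArith Lia Lra Classical Cantor
  FunctionalExtensionality ProofIrrelevance ClassicalEpsilon.
Import ListNotations.
Open Scope R_scope.

Section GroupFacts.
Variable G : Group.
Notation "x * y" := (gmul G x y).
Notation "1" := (gone G).

Lemma mul_cancel_l (a x y : G) : a * x = a * y -> x = y.
Proof.
  intro H. rewrite <- (gmul_1l G x), <- (gmul_1l G y), <- (gmul_Vl G a).
  rewrite <- !gmul_assoc, H. reflexivity.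
Qed.

Lemma inv_unique (x y : G) : x * y = 1 -> y = ginv G x.
Proof.
  intro H. apply (mul_cancel_l x). rewrite H, gmul_Vr. reflexivity.
Qed.

Lemma inv_inv (x : G) : ginv G (ginv G x) = x.
Proof. symmetry. apply inv_unique. apply gmul_Vl. Qed.

Lemma inv_one : ginv G 1 = 1.
Proof. symmetry. apply inv_unique. apply gmul_1l. Qed.

Lemma inv_mul (x y : G) : ginv G (x * y) = ginv G y * ginv G x.
Proof.
  symmetry. apply inv_unique.
  rewrite gmul_assoc, <- (gmul_assoc G x y), gmul_Vr, gmul_1r, gmul_Vr. reflexivity.
Qed.

Lemma gpow_nat_add (x : G) a b : gpow_nat G x (a + b) = gpow_nat G x a * gpow_nat G x b.
Proof.
  induction a; simpl. now rewrite gmul_1l. now rewrite IHa, gmul_assoc.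
Qed.

Lemma gpow_nat_comm (x : G) n : x * gpow_nat G x n = gpow_nat G x n * x.
Proof.
  change (gpow_nat G x (S n) = gpow_nat G x n * x).
  replace (S n) with (n + 1)%nat by lia. rewrite gpow_nat_add. simpl. now rewrite gmul_1r.
Qed.

Lemma gpow_nat_mul (x : G) a b : gpow_nat G x (a * b) = gpow_nat G (gpow_nat G x a) b.
Proof.
  induction b; simpl. now rewrite Nat.mul_0_r.
  rewrite Nat.mul_succ_r, gpow_nat_add, IHb.
  change (gpow_nat G (gpow_nat G x a) b * gpow_nat G x a =
          gpow_nat G (gpow_nat G x a) (S b)).
  symmetry. rewrite <- gpow_nat_comm. reflexivity.
Qed.

Lemma gpow_nat_inv (x : G) n : gpow_nat G (ginv G x) n = ginv G (gpow_nat G x n).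
Proof.
  induction n; simpl. now rewrite inv_one.
  rewrite IHn, <- inv_mul, gpow_nat_comm. reflexivity.
Qed.

Lemma gpow_nat_one n : gpow_nat G 1 n = 1.
Proof. induction n; simpl; auto. rewrite IHn; apply gmul_1l. Qed.

Lemma gpow_succ (x : G) z : gpow G x (z + 1) = x * gpow G x z.
Proof.
  destruct z as [|p|p]; simpl.
  - now rewrite gmul_1r.
  - rewrite Pos2Nat.inj_add. simpl. rewrite Nat.add_1_r. reflexivity.
  - destruct (Pos.eq_dec p 1) as [->|Hp].
    + simpl. rewrite gmul_1r, gmul_Vr. reflexivity.
    + rewrite Z.pos_sub_lt by lia. simpl.
      assert (Pos.to_nat p = S (Pos.to_nat (p - 1))) as E by lia.
      rewrite E. simpl. rewrite gpow_nat_comm, inv_mul, gmul_assoc, gmul_Vr, gmul_1l. reflexivity.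
Qed.

Lemma gpow_pred (x : G) z : gpow G x (z - 1) = ginv G x * gpow G x z.
Proof.
  pose proof (gpow_succ x (z - 1)) as H. replace (z - 1 + 1)%Z with z in H by lia.
  rewrite H, gmul_assoc, gmul_Vl, gmul_1l. reflexivity.
Qed.

End GroupFacts.

Definition lsum (i : nat) (l : letter) : Z :=
  if Nat.eqb (fst l) i then (if snd l then 1 else -1)%Z else 0%Z.
Fixpoint es (i : nat) (w : word) : Z :=
  match w with [] => 0%Z | l :: w' => (lsum i l + es i w')%Z end.

Lemma es_app i u v : es i (u ++ v) = (es i u + es i v)%Z.
Proof. induction u; simpl; lia. Qed.

Definition delta (G : Group) (i : nat) (r : G) : nat -> G :=
  fun j => if Nat.eqb j i then r else gone G.

Lemma eval_delta (G : Group) i r w : eval_word G (delta G i r) w = gpow G r (es i w).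
Proof.
  induction w as [|l w IH]; simpl. reflexivity.
  rewrite IH. unfold eval_letter, lsum, delta.
  destruct (Nat.eqb (fst l) i); destruct (snd l).
  - rewrite Z.add_comm, gpow_succ. reflexivity.
  - replace (-1 + es i w)%Z with (es i w - 1)%Z by lia. rewrite gpow_pred. reflexivity.
  - rewrite gmul_1l. reflexivity.
  - rewrite inv_one, gmul_1l. reflexivity.
Qed.

Lemma fe_app p x y s : free_eq x y -> free_eq (p ++ x ++ s) (p ++ y ++ s).
Proof.
  induction 1.
  - apply fe_refl.
  - now apply fe_sym.
  - eapply fe_trans; eauto.
  - replace (p ++ (u ++ a :: linv a :: v) ++ s) with ((p ++ u) ++ a :: linv a :: (v ++ s))
      by (rewrite <- !app_assoc; reflexivity).
    replace (p ++ (u ++ v) ++ s) with ((p ++ u) ++ (v ++ s)) by (rewrite <- !app_assoc; reflexivity).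
    apply fe_cancel.
Qed.

Lemma linv_linv l : linv (linv l) = l.
Proof. destruct l as [a b]; unfold linv; simpl; now rewrite Bool.negb_involutive. Qed.

Lemma winv_cons a u : winv (a :: u) = winv u ++ [linv a].
Proof. reflexivity. Qed.

Lemma winv_winv u : winv (winv u) = u.
Proof.
  unfold winv. rewrite map_rev, rev_involutive, map_map.
  erewrite map_ext. apply map_id. intro; apply linv_linv.
Qed.

Lemma winv_cancel u : free_eq (winv u ++ u) [].
Proof.
  induction u as [|a u IH]; simpl. apply fe_refl.
  rewrite winv_cons, <- app_assoc. simpl.
  eapply fe_trans; [|exact IH].
  pattern a at 2; rewrite <- (linv_linv a). apply fe_cancel.
Qed.

Lemma word_in_winv m u : word_in m u -> word_in m (winv u).
Proof.
  unfold word_in, winv. intro H. apply Forall_rev. apply Forall_map.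
  eapply Forall_impl; [|exact H]. intros [a b]; simpl; auto.
Qed.

Lemma notin_sign l w : ~ In (linv l) w ->
  (snd l = true -> (es (fst l) w >= 0)%Z) /\ (snd l = false -> (es (fst l) w <= 0)%Z).
Proof.
  induction w as [|k w IH]; simpl; intro H. lia.
  assert (~ In (linv l) w) as H' by tauto. specialize (IH H').
  unfold lsum. destruct (Nat.eqb (fst k) (fst l)) eqn:E.
  - apply Nat.eqb_eq in E.
    destruct k as [k1 k2], l as [l1 l2]; cbn [fst snd] in *; subst.
    destruct IH as [I1 I2].
    destruct k2, l2; cbn [fst snd] in *.
    + split; intro Hs; [specialize (I1 Hs); lia | discriminate].
    + exfalso; apply H; left; reflexivity.
    + exfalso; apply H; left; reflexivity.
    + split; intro Hs; [discriminate | specialize (I2 Hs); lia].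
  - destruct IH as [I1 I2]. split; intro Hs; [specialize (I1 Hs)|specialize (I2 Hs)]; lia.
Qed.

Lemma lsum_linv i l : (lsum i l + lsum i (linv l) = 0)%Z.
Proof. destruct l as [a b]; unfold lsum, linv; simpl. destruct (Nat.eqb a i), b; simpl; lia. Qed.

Lemma es_zero_commutator m : forall n w, (length w <= n)%nat -> word_in m w ->
  (forall i, es i w = 0%Z) -> in_commutator_subgroup m w.
Proof.
  induction n as [|n IHn]; intros w Hl Hw Hes.
  - destruct w; [|simpl in Hl; lia].
    exists []. split. constructor. simpl. apply fe_refl.
  - destruct w as [|l w'].
    + exists []. split. constructor. simpl. apply fe_refl.
    + assert (In (linv l) w') as Hin.
      { destruct (classic (In (linv l) w')) as [|Hn]; auto. exfalso.
        pose proof (notin_sign l w' Hn) as [H1 H2]. specialize (Hes (fst l)). simpl in Hes.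
        unfold lsum in Hes. rewrite Nat.eqb_refl in Hes.
        destruct (snd l); [specialize (H1 eq_refl)|specialize (H2 eq_refl)]; lia. }
      apply in_split in Hin. destruct Hin as [u [v ->]].
      unfold word_in in Hw. inversion Hw as [|? ? Hl0 Hw']; subst.
      apply Forall_app in Hw'. destruct Hw' as [Hu Hv]. inversion Hv; subst.
      destruct (IHn (u ++ v)) as [ps [Hps Hfe]].
      * simpl in Hl. rewrite length_app in *. simpl in Hl. lia.
      * apply Forall_app; split; auto.
      * intro i. specialize (Hes i). simpl in Hes. rewrite es_app in *. simpl in Hes.
        pose proof (lsum_linv i l). lia.
      * exists (([linv l], winv u) :: ps). split.
        { constructor; auto. simpl. split.
          - constructor; [|constructor]. destruct l; simpl in *; auto.
          - apply word_in_winv. exact Hu. }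
        set (X := concat (map (fun p : word * word => wcomm (fst p) (snd p)) ps)) in *.
        change (free_eq (l :: u ++ linv l :: v) (wcomm [linv l] (winv u) ++ X)).
        assert (wcomm [linv l] (winv u) = [l] ++ u ++ [linv l] ++ winv u) as HC.
        { unfold wcomm. rewrite winv_winv. unfold winv at 1. simpl. now rewrite linv_linv. }
        rewrite HC. set (C := [l] ++ u ++ [linv l] ++ winv u).
        apply fe_trans with (C ++ (u ++ v)).
        -- pose proof (fe_app (l :: u ++ [linv l]) (winv u ++ u) [] v (winv_cancel u)) as H.
           replace (C ++ u ++ v) with ((l :: u ++ [linv l]) ++ (winv u ++ u) ++ v)
             by (unfold C; simpl; rewrite <- !app_assoc; reflexivity).
           replace (l :: u ++ linv l :: v) with ((l :: u ++ [linv l]) ++ [] ++ v)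
             by (simpl; rewrite <- !app_assoc; reflexivity).
           apply fe_sym. exact H.
        -- pose proof (fe_app C (u ++ v) X [] Hfe) as H. rewrite !app_nil_r in H. exact H.
Qed.

Definition divisible (G : Group) : Prop :=
  forall (y : G) (n : nat), exists r : G, gpow_nat G r (S n) = y.

Lemma word_part (G : Group) : divisible G ->
  forall (m : nat) (w : word), (1 <= m)%nat -> word_in m w ->
        ~ in_commutator_subgroup m w -> word_map_surjective G m w.
Proof.
  intros Hdiv m w _ Hw Hnc y.
  assert (exists i, es i w <> 0%Z) as [i Hi].
  { apply NNPP. intro H. apply Hnc. apply (es_zero_commutator m (length w)); auto.
    intro i. apply NNPP. intro H'. apply H. exists i. exact H'. }
  destruct (es i w) as [|p|p] eqn:E; [congruence| |].
  - destruct (Hdiv y (pred (Pos.to_nat p))) as [r Hr].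
    exists (delta G i r). rewrite eval_delta, E. simpl.
    replace (Pos.to_nat p) with (S (pred (Pos.to_nat p))) by lia. exact Hr.
  - destruct (Hdiv (ginv G y) (pred (Pos.to_nat p))) as [r Hr].
    exists (delta G i r). rewrite eval_delta, E. simpl.
    replace (Pos.to_nat p) with (S (pred (Pos.to_nat p))) by lia. rewrite Hr. apply inv_inv.
Qed.

Lemma cv_const c : Un_cv (fun _ => c) c.
Proof. intros e He. exists O. intros. unfold Rdist. rewrite Rminus_diag, Rabs_R0. lra. Qed.

Lemma cv_geom C : Un_cv (fun k => C / 2 ^ k) 0.
Proof.
  intros e He.
  destruct (pow_lt_1_zero (1/2)) with (y := e / (Rabs C + 1)) as [N HN].
  { rewrite Rabs_right; lra. }
  { apply Rdiv_lt_0_compat; [lra|]. pose proof (Rabs_pos C); lra. }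
  exists N. intros n Hn. specialize (HN n Hn). unfold Rdist. rewrite Rminus_0_r.
  replace (C / 2 ^ n) with (C * (1/2) ^ n).
  2:{ unfold Rdiv. rewrite Rmult_1_l, pow_inv. reflexivity. }
  rewrite Rabs_mult. pose proof (Rabs_pos C).
  pose proof (Rabs_pos ((1/2)^n)).
  apply Rlt_le_trans with ((Rabs C + 1) * Rabs ((1/2)^n)).
  - assert (0 < Rabs ((1/2)^n)). { apply Rabs_pos_lt. apply pow_nonzero. lra. }
    nra.
  - assert (HH: (Rabs C + 1) * Rabs ((1 / 2) ^ n) < (Rabs C + 1) * (e / (Rabs C + 1))) by nra.
    field_simplify in HH; [|lra]. lra.
Qed.

Lemma lim_transfer (a b : nat -> R) L c C :
  Un_cv b L -> (forall k, Rabs (a k - c * b k) <= C / 2 ^ k) -> Un_cv a (c * L).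
Proof.
  intros Hb Hab.
  assert (Un_cv (fun k => (a k - c * b k) + c * b k) (0 + c * L)) as H.
  { apply CV_plus.
    - intros e He. destruct (cv_geom C e He) as [N HN]. exists N. intros n Hn.
      specialize (HN n Hn). specialize (Hab n). unfold Rdist in *. rewrite Rminus_0_r in *.
      pose proof (Rabs_pos (a n - c * b n)).
      assert (C / 2 ^ n >= 0) by (apply Rle_ge; eapply Rle_trans; eauto).
      rewrite Rabs_right in HN by lra. lra.
    - apply (CV_mult (fun _ => c)). apply cv_const. exact Hb. }
  rewrite Rplus_0_l in H. intros e He. destruct (H e He) as [N HN]. exists N. intros n Hn.
  specialize (HN n Hn). replace (a n - c * b n + c * b n) with (a n) in HN by ring. exact HN.
Qed.

Lemma Rabs_le_elim x D : Rabs x <= D -> -D <= x <= D.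
Proof. unfold Rabs; destruct (Rcase_abs x); intros; lra. Qed.

Lemma lim_bound (a : nat -> R) l c D : Un_cv a l -> (forall k, Rabs (a k - c) <= D) ->
  Rabs (l - c) <= D.
Proof.
  intros Ha H. apply Rabs_le.
  assert (c - D <= l).
  { apply (@Rle_cv_lim (fun _ => c - D) a (c - D) l); auto. 2: apply cv_const.
    intro n. specialize (H n). apply Rabs_le_elim in H. lra. }
  assert (l <= c + D).
  { apply (@Rle_cv_lim a (fun _ => c + D) l (c + D)); auto. 2: apply cv_const.
    intro n. specialize (H n). apply Rabs_le_elim in H. lra. }
  lra.
Qed.

Lemma div_nonneg a b : 0 <= a -> 0 < b -> 0 <= a / b.
Proof. intros. unfold Rdiv. apply Rmult_le_pos; auto. left; apply Rinv_0_lt_compat; auto. Qed.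

Section Homog.
Variable E : Group.
Variable phi : E -> R.
Variable D : R.
Hypothesis Hq : forall g h : E, Rabs (phi g + phi h - phi (gmul E g h)) <= D.

Lemma D_nonneg : 0 <= D.
Proof. eapply Rle_trans; [apply Rabs_pos|apply (Hq (gone E) (gone E))]. Qed.

Definition useq (g : E) (k : nat) : R := phi (gpow_nat E g (2 ^ k)) / 2 ^ k.

Lemma pow2_pos k : 0 < 2 ^ k.
Proof. apply pow_lt; lra. Qed.

Lemma useq_step g k : Rabs (useq g (S k) - useq g k) <= D / 2 ^ (S k).
Proof.
  unfold useq. replace (2 ^ S k)%nat with (2 ^ k + 2 ^ k)%nat by (simpl; lia).
  rewrite gpow_nat_add.
  pose proof (Hq (gpow_nat E g (2 ^ k)) (gpow_nat E g (2 ^ k))) as H.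
  set (a := phi (gpow_nat E g (2 ^ k))) in *.
  set (b := phi (gmul E (gpow_nat E g (2 ^ k)) (gpow_nat E g (2 ^ k)))) in *.
  pose proof (pow2_pos k). simpl pow.
  replace (b / (2 * 2 ^ k) - a / 2 ^ k) with (- (a + a - b) / (2 * 2 ^ k)) by (field; lra).
  unfold Rdiv. rewrite Rabs_mult, Rabs_Ropp. rewrite (Rabs_right (/ _)).
  2: { apply Rle_ge, Rlt_le, Rinv_0_lt_compat. lra. }
  apply Rmult_le_compat_r; auto. apply Rlt_le, Rinv_0_lt_compat. lra.
Qed.

Lemma useq_tele g N n : Rabs (useq g (N + n) - useq g N) <= D / 2 ^ N - D / 2 ^ (N + n).
Proof.
  induction n.
  - rewrite Nat.add_0_r, Rminus_diag, Rabs_R0. lra.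
  - replace (N + S n)%nat with (S (N + n)) by lia.
    pose proof (useq_step g (N + n)).
    eapply Rle_trans. 
    { replace (useq g (S (N + n)) - useq g N) with
        ((useq g (S (N + n)) - useq g (N + n)) + (useq g (N + n) - useq g N)) by ring.
      apply Rabs_triang. }
    assert (D / 2 ^ S (N + n) = D / 2 ^ (N + n) - D / 2 ^ S (N + n)).
    { simpl. pose proof (pow2_pos (N + n)). field. lra. }
    lra.
Qed.

Lemma useq_cauchy g : Cauchy_crit (useq g).
Proof.
  intros e He. destruct (cv_geom D (e / 2) ltac:(lra)) as [N HN]. exists N.
  intros n m Hn Hm. unfold Rdist.
  assert (forall p, (p >= N)%nat -> Rabs (useq g p - useq g N) <= e / 2 * 0 + D / 2 ^ N) as HB.
  { intros p Hp. replace p with (N + (p - N))%nat by lia. eapply Rle_trans. apply useq_tele.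
    pose proof (pow2_pos (N + (p - N))). pose proof D_nonneg.
    assert (0 <= D / 2 ^ (N + (p - N))) by (apply div_nonneg; lra). lra. }
  specialize (HN N (le_n N)). unfold Rdist in HN. rewrite Rminus_0_r in HN.
  pose proof (Rle_abs (D / 2 ^ N)).
  pose proof (HB n Hn). pose proof (HB m Hm).
  replace (useq g n - useq g m) with ((useq g n - useq g N) - (useq g m - useq g N)) by ring.
  eapply Rle_lt_trans. apply Rabs_triang. rewrite Rabs_Ropp. lra.
Qed.

Definition hq (g : E) : R := proj1_sig (R_complete (useq g) (useq_cauchy g)).

Lemma hq_cv g : Un_cv (useq g) (hq g).
Proof. unfold hq. destruct (R_complete (useq g) (useq_cauchy g)). simpl. auto. Qed.

Lemma hq_close g : Rabs (hq g - phi g) <= D.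
Proof.
  apply (lim_bound (useq g)). apply hq_cv. intro k.
  pose proof (useq_tele g 0 k). simpl in H.
  unfold useq at 2 in H. simpl in H. rewrite gmul_1r in H.
  replace (phi g / 1) with (phi g) in H by field.
  pose proof (pow2_pos k). pose proof D_nonneg.
  assert (0 <= D / 2 ^ k) by (apply div_nonneg; lra). lra.
Qed.

Lemma hq_quasi g h : Rabs (hq g + hq h - hq (gmul E g h)) <= 4 * D.
Proof.
  pose proof (hq_close g). pose proof (hq_close h). pose proof (hq_close (gmul E g h)).
  pose proof (Hq g h).
  apply Rabs_le_elim in H. apply Rabs_le_elim in H0. apply Rabs_le_elim in H1.
  apply Rabs_le_elim in H2. apply Rabs_le. lra.
Qed.

Lemma phi_pow_mul g p m : Rabs (phi (gpow_nat E g (p * m)) - INR p * phi (gpow_nat E g m)) <= (INR p + 1) * D.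
Proof.
  induction p.
  - simpl. rewrite Rmult_0_l, Rminus_0_r, Rplus_0_l, Rmult_1_l. 
    pose proof (Hq (gone E) (gone E)). rewrite gmul_1l in H.
    replace (phi (gone E) + phi (gone E) - phi (gone E)) with (phi (gone E)) in H by ring. exact H.
  - rewrite S_INR. simpl (S p * m)%nat. rewrite gpow_nat_add.
    pose proof (Hq (gpow_nat E g m) (gpow_nat E g (p * m))).
    apply Rabs_le_elim in H. apply Rabs_le_elim in IHp. apply Rabs_le. lra.
Qed.

Lemma hq_pow_nat g p : hq (gpow_nat E g p) = INR p * hq g.
Proof.
  apply (UL_sequence (useq (gpow_nat E g p))). apply hq_cv.
  apply (lim_transfer _ (useq g) _ _ ((INR p + 1) * D)). apply hq_cv.
  intro k. unfold useq. rewrite <- gpow_nat_mul.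
  pose proof (phi_pow_mul g p (2 ^ k)). pose proof (pow2_pos k).
  replace (phi (gpow_nat E g (p * 2 ^ k)) / 2 ^ k - INR p * (phi (gpow_nat E g (2 ^ k)) / 2 ^ k))
    with ((phi (gpow_nat E g (p * 2 ^ k)) - INR p * phi (gpow_nat E g (2 ^ k))) * / 2 ^ k)
    by (field; lra).
  rewrite Rabs_mult, (Rabs_right (/ _)) by (apply Rle_ge, Rlt_le, Rinv_0_lt_compat; lra).
  unfold Rdiv. apply Rmult_le_compat_r; auto. apply Rlt_le, Rinv_0_lt_compat; lra.
Qed.

Lemma hq_inv g : hq (ginv E g) = -1 * hq g.
Proof.
  apply (UL_sequence (useq (ginv E g))). apply hq_cv.
  apply (lim_transfer _ (useq g) _ _ (2 * D)). apply hq_cv.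
  intro k. unfold useq. rewrite gpow_nat_inv.
  set (y := gpow_nat E g (2 ^ k)).
  assert (Rabs (phi (ginv E y) + phi y) <= 2 * D).
  { pose proof (Hq (ginv E y) y). rewrite gmul_Vl in H.
    pose proof (Hq (gone E) (gone E)). rewrite gmul_1l in H0.
    apply Rabs_le_elim in H. apply Rabs_le_elim in H0. apply Rabs_le. lra. }
  pose proof (pow2_pos k).
  replace (phi (ginv E y) / 2 ^ k - -1 * (phi y / 2 ^ k))
    with ((phi (ginv E y) + phi y) * / 2 ^ k) by (field; lra).
  rewrite Rabs_mult, (Rabs_right (/ _)) by (apply Rle_ge, Rlt_le, Rinv_0_lt_compat; lra).
  unfold Rdiv. apply Rmult_le_compat_r; auto. apply Rlt_le, Rinv_0_lt_compat; lra.
Qed.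

Lemma hq_homogeneous : homogeneous E hq.
Proof.
  intros g [|p|p]; simpl.
  - pose proof (hq_pow_nat g 0). simpl in H. rewrite H. rewrite !Rmult_0_l. reflexivity.
  - rewrite hq_pow_nat, INR_IPR. reflexivity.
  - rewrite hq_inv, hq_pow_nat, INR_IPR. replace (IZR (Z.neg p)) with (- IPR p) by reflexivity. ring.
Qed.

Lemma hq_homog_quasi : homog_quasimorphism E hq.
Proof.
  split. exists (4 * D). apply hq_quasi. apply hq_homogeneous.
Qed.

Lemma hq_const g c : (forall n, phi (gpow_nat E g n) = INR n * c) -> hq g = c.
Proof.
  intro H. apply (UL_sequence (useq g)). apply hq_cv.
  intros e He. exists O. intros n _. unfold useq, Rdist. rewrite H, pow_INR. simpl INR.
  replace ((1 + 1) ^ n * c / 2 ^ n - c) with 0. rewrite Rabs_R0; lra.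
  pose proof (pow2_pos n). replace (1 + 1) with 2 by ring. field. lra.
Qed.

End Homog.

Section Prod.
Variable E : Group.
Definition pmul (f g : nat -> E) : nat -> E := fun i => gmul E (f i) (g i).
Definition pinv (f : nat -> E) : nat -> E := fun i => ginv E (f i).
Definition pone : nat -> E := fun _ => gone E.
Definition PGroup : Group.
Proof.
  refine (Build_Group (nat -> E) pmul pinv pone _ _ _ _ _);
  intros; apply functional_extensionality; intro i; unfold pmul, pinv, pone.
  apply gmul_assoc. apply gmul_1l. apply gmul_1r. apply gmul_Vl. apply gmul_Vr.
Defined.
Lemma PGroup_pow (f : PGroup) n i : gpow_nat PGroup f n i = gpow_nat E (f i) n.
Proof. induction n; simpl; auto. unfold pmul. now rewrite IHn. Qed.
End Prod.

Section Closure.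
Variable K : Group.
Variable root : K -> nat -> K.
Hypothesis Hroot : forall y n, gpow_nat K (root y n) (S n) = y.
Variable gen : nat -> K.

Inductive term := tgen (k : nat) | tone | tmul (a b : term) | tinv (a : term) | troot (a : term) (n : nat).

Fixpoint interp (t : term) : K :=
  match t with
  | tgen k => gen k
  | tone => gone K
  | tmul a b => gmul K (interp a) (interp b)
  | tinv a => ginv K (interp a)
  | troot a n => root (interp a) n
  end.

Definition Hc := {x : K | exists t, interp t = x}.

Lemma Hc_eq (x y : Hc) : proj1_sig x = proj1_sig y -> x = y.
Proof. destruct x, y; simpl; intro; subst; f_equal; apply proof_irrelevance. Qed.

Definition Hmul (x y : Hc) : Hc.
Proof.
  exists (gmul K (proj1_sig x) (proj1_sig y)).
  destruct x as [x [a Ha]], y as [y [b Hb]]. exists (tmul a b). simpl. now subst.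
Defined.
Definition Hinv (x : Hc) : Hc.
Proof.
  exists (ginv K (proj1_sig x)). destruct x as [x [a Ha]]. exists (tinv a). simpl. now subst.
Defined.
Definition Hone : Hc.
Proof. exists (gone K). exists tone. reflexivity. Defined.

Definition HGroup : Group.
Proof.
  refine (Build_Group Hc Hmul Hinv Hone _ _ _ _ _); intros; apply Hc_eq; simpl.
  apply gmul_assoc. apply gmul_1l. apply gmul_1r. apply gmul_Vl. apply gmul_Vr.
Defined.

Lemma HGroup_pow_nat (x : HGroup) n : proj1_sig (gpow_nat HGroup x n) = gpow_nat K (proj1_sig x) n.
Proof. induction n; simpl; auto. now rewrite IHn. Qed.

Lemma HGroup_pow (x : HGroup) z : proj1_sig (gpow HGroup x z) = gpow K (proj1_sig x) z.
Proof. destruct z; simpl; auto; now rewrite HGroup_pow_nat. Qed.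

Lemma HGroup_divisible : divisible HGroup.
Proof.
  intros y n. destruct y as [y [a Ha]].
  assert (exists t, interp t = root y n) as Hr by (exists (troot a n); simpl; now subst).
  exists (exist _ (root y n) Hr). apply Hc_eq. rewrite HGroup_pow_nat. simpl. apply Hroot.
Qed.

Fixpoint enc (t : term) : nat :=
  match t with
  | tgen k => Cantor.to_nat (0, k)
  | tone => Cantor.to_nat (1, 0)
  | tmul a b => Cantor.to_nat (2, Cantor.to_nat (enc a, enc b))
  | tinv a => Cantor.to_nat (3, enc a)
  | troot a n => Cantor.to_nat (4, Cantor.to_nat (enc a, n))
  end%nat.

Lemma enc_inj : forall s t, enc s = enc t -> s = t.
Proof.
  induction s; destruct t; cbn [enc]; intro H; apply Cantor.to_nat_inj in H;
    apply pair_equal_spec in H; destruct H as [H0 H']; try discriminate; try reflexivity.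
  - now subst.
  - apply Cantor.to_nat_inj in H'. apply pair_equal_spec in H'. destruct H'. f_equal; auto.
  - f_equal; auto.
  - apply Cantor.to_nat_inj in H'. apply pair_equal_spec in H'. destruct H'. f_equal; auto.
Qed.

Lemma HGroup_countable : countable_group HGroup.
Proof.
  exists (fun x : HGroup => enc (proj1_sig (constructive_indefinite_description _ (proj2_sig x)))).
  intros x y H. apply enc_inj in H.
  destruct (constructive_indefinite_description _ (proj2_sig x)) as [a Ha].
  destruct (constructive_indefinite_description _ (proj2_sig y)) as [b Hb]. simpl in H. subst.
  apply Hc_eq. congruence.
Qed.

End Closure.

Section Final.
Variable E : Group.
Variable phi : E -> R.
Variable D : R.
Hypothesis Hq : forall g h : E, Rabs (phi g + phi h - phi (gmul E g h)) <= D.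
Hypothesis Ediv : divisible E.
Variables p1 p2 p3 : E.
Hypothesis H1 : hq E phi D Hq p1 = 0.
Hypothesis H2 : hq E phi D Hq p2 = 0.
Hypothesis H3 : hq E phi D Hq p3 = 0.
Hypothesis H123 : hq E phi D Hq (gmul E p1 (gmul E p2 p3)) <> 0.

Local Notation hqE := (hq E phi D Hq).
Local Notation K := (PGroup E).

Lemma K_root_ex : forall (y : K) n, exists r : K, gpow_nat K r (S n) = y.
Proof.
  intros y n.
  assert (forall i, exists r, gpow_nat E r (S n) = y i) as H by (intro i; apply Ediv).
  apply choice in H. destruct H as [f Hf]. exists f.
  apply functional_extensionality. intro i. rewrite PGroup_pow. apply Hf.
Qed.

Definition Kroot (y : K) (n : nat) : K :=
  proj1_sig (constructive_indefinite_description _ (K_root_ex y n)).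
Lemma Kroot_spec y n : gpow_nat K (Kroot y n) (S n) = y.
Proof. unfold Kroot. destruct (constructive_indefinite_description _ _). auto. Qed.

Definition ej (j : nat) (x : E) : K := fun i => if Nat.eqb i j then x else gone E.
Definition pp (r : nat) : E := match r with O => p1 | 1%nat => p2 | _ => p3 end.
Definition gens (k : nat) : K := let (j, r) := Cantor.of_nat k in ej j (pp r).

Definition GG : Group := HGroup K Kroot gens.

Definition phis (i : nat) (x : GG) : R := hqE (proj1_sig x i).

Lemma K_pow (f : K) z i : gpow K f z i = gpow E (f i) z.
Proof. destruct z; simpl; auto; unfold pinv; now rewrite PGroup_pow. Qed.

Lemma phis_hq i : homog_quasimorphism GG (phis i).
Proof.
  split.
  - exists (4 * D). intros g h. unfold phis. apply hq_quasi.
  - intros g n. unfold phis. rewrite HGroup_pow, K_pow. apply hq_homogeneous.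
Qed.

Lemma hq_one : hqE (gone E) = 0.
Proof.
  pose proof (hq_homogeneous E phi D Hq (gone E) 0%Z). simpl in H. rewrite H. ring.
Qed.

Lemma lin_comb_single c n (g : GG) j :
  (forall i, i <> j -> proj1_sig g i = gone E) ->
  lin_comb GG c phis n g = if Nat.ltb j n then c j * hqE (proj1_sig g j) else 0.
Proof.
  intro Hg. induction n; simpl.
  - destruct j; reflexivity.
  - rewrite IHn. unfold phis.
    destruct (Nat.eq_dec n j) as [->|Hne].
    + rewrite (proj2 (Nat.ltb_ge j j)) by lia. rewrite (proj2 (Nat.ltb_lt j (S j))) by lia. apply Rplus_0_l.
    + rewrite (Hg n Hne). rewrite hq_one, Rmult_0_r, Rplus_0_r.
      destruct (Nat.ltb j n) eqn:E1; destruct (Nat.ltb j (S n)) eqn:E2; auto;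
        apply Nat.ltb_lt in E1 || apply Nat.ltb_ge in E1;
        apply Nat.ltb_lt in E2 || apply Nat.ltb_ge in E2; lia.
Qed.

Lemma gen_in j r : exists t, interp K Kroot gens t = ej j (pp r).
Proof.
  exists (tgen (Cantor.to_nat (j, r))). cbn [interp]. unfold gens. rewrite Cantor.cancel_of_to. reflexivity.
Qed.

Definition xg j r : GG := exist _ (ej j (pp r)) (gen_in j r).

Lemma xg_single j r i : i <> j -> proj1_sig (xg j r) i = gone E.
Proof. intro H. simpl. unfold ej. rewrite (proj2 (Nat.eqb_neq i j) H). reflexivity. Qed.

Lemma Q_inf : Q_mod_Hom_infinite_dim GG.
Proof.
  intro n. exists phis. split. intros; apply phis_hq.
  intros c Hhom j Hj.
  set (a := xg j 0). set (b := xg j 1). set (d := xg j 2).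
  pose proof (Hhom a (gmul GG b d)) as E1. pose proof (Hhom b d) as E2.
  assert (forall g : GG, (forall i, i <> j -> proj1_sig g i = gone E) ->
            lin_comb GG c phis n g = c j * hqE (proj1_sig g j)) as HL.
  { intros g Hg. rewrite (lin_comb_single c n g j Hg). rewrite (proj2 (Nat.ltb_lt j n) Hj). auto. }
  assert (forall g h : GG, (forall i, i <> j -> proj1_sig g i = gone E) ->
           (forall i, i <> j -> proj1_sig h i = gone E) ->
           (forall i, i <> j -> proj1_sig (gmul GG g h) i = gone E)) as Hmul.
  { intros g h Hg Hh i Hi. simpl. unfold pmul. rewrite Hg, Hh by auto. apply gmul_1l. }
  assert (forall r i, i <> j -> proj1_sig (xg j r) i = gone E) as Hx by (intros; apply xg_single; auto).
  assert (Sa : forall i, i <> j -> proj1_sig a i = gone E) by apply Hx.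
  assert (Sb : forall i, i <> j -> proj1_sig b i = gone E) by apply Hx.
  assert (Sd : forall i, i <> j -> proj1_sig d i = gone E) by apply Hx.
  assert (Sbd := Hmul b d Sb Sd). assert (Sabd := Hmul a _ Sa Sbd).
  rewrite (HL _ Sabd), (HL _ Sa), (HL _ Sbd) in E1.
  rewrite (HL _ Sbd), (HL _ Sb), (HL _ Sd) in E2.
  simpl in E1, E2. unfold pmul, ej in E1, E2. rewrite Nat.eqb_refl in E1, E2.
  simpl in E1, E2. rewrite H1 in E1. rewrite H2, H3 in E2.
  apply NNPP. intro Hc. apply H123. apply (Rmult_eq_reg_l (c j)); auto. lra.
Qed.

Theorem final_thm :
  exists G : Group,
    countable_group G /\
    (forall (m : nat) (w : word), (1 <= m)%nat -> word_in m w ->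
        ~ in_commutator_subgroup m w -> word_map_surjective G m w) /\
    Q_mod_Hom_infinite_dim G.
Proof.
  exists GG. split; [|split].
  - apply HGroup_countable.
  - apply word_part. apply HGroup_divisible. apply Kroot_spec.
  - apply Q_inf.
Qed.
End Final.

Definition cm (z w : R * R) : R * R :=
  (fst z * fst w - snd z * snd w, fst z * snd w + snd z * fst w).
Definition ca (z w : R * R) : R * R := (fst z + fst w, snd z + snd w).
Definition cc (z : R * R) : R * R := (fst z, - snd z).
Definition cn (z : R * R) : R * R := (- fst z, - snd z).
Definition n2 (z : R * R) : R := fst z * fst z + snd z * snd z.

Record V4 := mkV { al : R * R; be : R * R }.

Definition vmul (v w : V4) : V4 :=
  mkV (ca (cm (al v) (al w)) (cm (be v) (cc (be w))))
      (ca (cm (al v) (be w)) (cm (be v) (cc (al w)))).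
Definition vneg (v : V4) : V4 := mkV (cn (al v)) (cn (be v)).
Definition vinv (v : V4) : V4 := mkV (cc (al v)) (cn (be v)).
Definition vone : V4 := mkV (1, 0) (0, 0).
Definition det (v : V4) : R := n2 (al v) - n2 (be v).
Definition isn (v : V4) : Prop := 0 < fst (al v) \/ (fst (al v) = 0 /\ 0 < snd (al v)).

Definition nrm (v : V4) : V4 :=
  if Rlt_dec 0 (fst (al v)) then v else
  if Rlt_dec (fst (al v)) 0 then vneg v else
  if Rlt_dec 0 (snd (al v)) then v else vneg v.

Ltac vdestr := repeat match goal with
  | v : V4 |- _ => let a := fresh "a" in let b := fresh "b" in destruct v as [[a ?] [b ?]]
  end.
Ltac vring := vdestr; unfold vmul, vneg, vinv, vone, cm, ca, cc, cn, det, n2; simpl;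
  first [ ring | apply (f_equal2 mkV); apply injective_projections; simpl; ring
        | apply injective_projections; simpl; ring ].

Lemma vmul_assoc x y z : vmul x (vmul y z) = vmul (vmul x y) z.
Proof. vring. Qed.
Lemma vmul_neg_l x y : vmul (vneg x) y = vneg (vmul x y).
Proof. vring. Qed.
Lemma vmul_neg_r x y : vmul x (vneg y) = vneg (vmul x y).
Proof. vring. Qed.
Lemma vneg_neg x : vneg (vneg x) = x.
Proof. vring. Qed.
Lemma vmul_one_l x : vmul vone x = x.
Proof. vring. Qed.
Lemma vmul_one_r x : vmul x vone = x.
Proof. vring. Qed.
Lemma det_mul x y : det (vmul x y) = det x * det y.
Proof. vring. Qed.
Lemma det_neg x : det (vneg x) = det x.
Proof. vring. Qed.
Lemma det_inv x : det (vinv x) = det x.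
Proof. vring. Qed.
Lemma vmul_inv_r x : det x = 1 -> vmul x (vinv x) = vone.
Proof.
  intro H. vdestr. unfold det, n2 in H. simpl in H.
  unfold vmul, vinv, vone, cm, ca, cc, cn; simpl.
  apply (f_equal2 mkV); apply injective_projections; simpl; nra.
Qed.
Lemma vmul_inv_l x : det x = 1 -> vmul (vinv x) x = vone.
Proof.
  intro H. vdestr. unfold det, n2 in H. simpl in H.
  unfold vmul, vinv, vone, cm, ca, cc, cn; simpl.
  apply (f_equal2 mkV); apply injective_projections; simpl; nra.
Qed.

Lemma n2_nonneg z : 0 <= n2 z.
Proof. unfold n2. nra. Qed.

Lemma det_al_pos v : det v = 1 -> 1 <= n2 (al v).
Proof. unfold det. pose proof (n2_nonneg (be v)). lra. Qed.

Lemma al_nz v : 1 <= n2 (al v) -> ~ (fst (al v) = 0 /\ snd (al v) = 0).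
Proof. unfold n2. intros H [H1 H2]. rewrite H1, H2 in H. lra. Qed.

Lemma nrm_spec v : 1 <= n2 (al v) -> isn (nrm v) /\ (nrm v = v \/ nrm v = vneg v).
Proof.
  intro H. pose proof (al_nz v H) as Hz. unfold nrm, isn.
  destruct (Rlt_dec 0 (fst (al v))); [auto|].
  destruct (Rlt_dec (fst (al v)) 0). { split; auto. left. simpl. lra. }
  destruct (Rlt_dec 0 (snd (al v))). { split; auto. right. split; auto; lra. }
  split; auto. right. simpl. split. lra. destruct (Req_dec (snd (al v)) 0). exfalso; apply Hz; split; lra. lra.
Qed.

Lemma nrm_id v : isn v -> nrm v = v.
Proof.
  unfold isn, nrm. intros [H|[H1 H2]].
  - destruct (Rlt_dec 0 (fst (al v))); [auto|lra].
  - destruct (Rlt_dec 0 (fst (al v))); [auto|]. destruct (Rlt_dec (fst (al v)) 0); [lra|].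
    destruct (Rlt_dec 0 (snd (al v))); [auto|lra].
Qed.

Lemma nrm_neg v : 1 <= n2 (al v) -> nrm (vneg v) = nrm v.
Proof.
  intro H. pose proof (al_nz v H) as Hz. unfold nrm. simpl.
  repeat destruct Rlt_dec; try lra; try apply vneg_neg; try reflexivity;
    exfalso; apply Hz; split; lra.
Qed.

Lemma nrm_neg_eq v : 1 <= n2 (al v) -> forall w, (w = v \/ w = vneg v) -> nrm w = nrm v.
Proof. intros H w [->| ->]; auto. apply nrm_neg; auto. Qed.

Lemma n2_neg v : n2 (al (vneg v)) = n2 (al v).
Proof. vring. Qed.

Definition Pc (v w : V4) : R * R := cm (al (vmul v w)) (cc (cm (al v) (al w))).
Definition om (v w : V4) : R := atan (snd (Pc v w) / fst (Pc v w)).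

Lemma Pc_neg_l v w : Pc (vneg v) w = Pc v w.
Proof. unfold Pc. vring. Qed.
Lemma Pc_neg_r v w : Pc v (vneg w) = Pc v w.
Proof. unfold Pc. vring. Qed.

Lemma om_nrm_l v w : 1 <= n2 (al v) -> om (nrm v) w = om v w.
Proof.
  intro H. destruct (nrm_spec v H) as [_ [E|E]]; rewrite E; auto. unfold om. now rewrite Pc_neg_l.
Qed.
Lemma om_nrm_r v w : 1 <= n2 (al w) -> om v (nrm w) = om v w.
Proof.
  intro H. destruct (nrm_spec w H) as [_ [E|E]]; rewrite E; auto. unfold om. now rewrite Pc_neg_r.
Qed.

Lemma Pc_pos v w : det v = 1 -> det w = 1 -> 0 < fst (Pc v w).
Proof.
  intros Hv Hw. destruct v as [[x1 x2] [y1 y2]], w as [[z1 z2] [u1 u2]].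
  unfold det, n2 in *. simpl in *.
  unfold Pc, vmul, cm, ca, cc; simpl.
  set (m1 := x1 * z1 - x2 * z2). set (m2 := x1 * z2 + x2 * z1).
  set (s1 := y1 * u1 + y2 * u2). set (s2 := y2 * u1 - y1 * u2).
  assert (EM : m1 * m1 + m2 * m2 = (x1 * x1 + x2 * x2) * (z1 * z1 + z2 * z2)) by (unfold m1, m2; ring).
  assert (ES : s1 * s1 + s2 * s2 = (y1 * y1 + y2 * y2) * (u1 * u1 + u2 * u2)) by (unfold s1, s2; ring).
  assert (CS : (s1 * m1 + s2 * m2) * (s1 * m1 + s2 * m2) <= (s1 * s1 + s2 * s2) * (m1 * m1 + m2 * m2)).
  { assert (0 <= (s1 * m2 - s2 * m1) * (s1 * m2 - s2 * m1)) by exact (Rle_0_sqr _).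
    assert ((s1 * m1 + s2 * m2) * (s1 * m1 + s2 * m2) + (s1 * m2 - s2 * m1) * (s1 * m2 - s2 * m1)
            = (s1 * s1 + s2 * s2) * (m1 * m1 + m2 * m2)) by ring. lra. }
  set (A := x1 * x1 + x2 * x2) in *. set (B := z1 * z1 + z2 * z2) in *.
  assert (HA : 1 <= A) by nra. assert (HB : 1 <= B) by nra.
  assert (SS : s1 * s1 + s2 * s2 = (A - 1) * (B - 1)) by (rewrite ES; nra).
  assert (LT : (A - 1) * (B - 1) < A * B) by nra.
  assert (Hlt : (s1 * m1 + s2 * m2) * (s1 * m1 + s2 * m2) < (A * B) * (A * B)).
  { rewrite SS, EM in CS. nra. }
  match goal with |- 0 < ?e => replace e with (A * B + (s1 * m1 + s2 * m2)) end.
  2: { rewrite <- EM. unfold s1, s2, m1, m2. ring. }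
  nra.
Qed.

Definition th (z : R * R) : R := atan (snd z / fst z).

Lemma th_cs x y : 0 < x ->
  cos (atan (y / x)) * sqrt (x * x + y * y) = x /\ sin (atan (y / x)) * sqrt (x * x + y * y) = y.
Proof.
  intro Hx. rewrite cos_atan, sin_atan.
  assert (E : sqrt (x * x + y * y) = x * sqrt (1 + (y / x)²)).
  { replace (x * x + y * y) with (x² * (1 + (y / x)²)) by (unfold Rsqr; field; lra).
    rewrite sqrt_mult_alt by (apply Rle_0_sqr). rewrite sqrt_Rsqr by lra. reflexivity. }
  assert (0 < sqrt (1 + (y / x)²)) by (apply sqrt_lt_R0; pose proof (Rle_0_sqr (y / x)); lra).
  rewrite E. split; field; lra.
Qed.

Lemma angle_unique s s' : -PI < s < PI -> -PI < s' < PI -> cos s = cos s' -> sin s = sin s' -> s = s'.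
Proof.
  intros Hs Hs' Hc Hsn.
  assert (sin (s - s') = 0) as H0.
  { rewrite sin_minus, Hc, Hsn. ring. }
  assert (cos (s - s') = 1) as H1.
  { rewrite cos_minus, Hc, Hsn. pose proof (sin2_cos2 s'). unfold Rsqr in H. lra. }
  apply sin_eq_0_0 in H0. destruct H0 as [k Hk].
  assert (-2 < IZR k < 2) as Hk2.
  { pose proof PI_RGT_0. split.
    - apply (Rmult_lt_reg_r PI); auto. lra.
    - apply (Rmult_lt_reg_r PI); auto. lra. }
  destruct Hk2 as [Hk1 Hk2]. apply lt_IZR in Hk1. apply lt_IZR in Hk2.
  assert (k = 0 \/ k = 1 \/ k = -1)%Z as Hk3 by lia.
  destruct Hk3 as [ -> | [ -> | -> ] ].
  - lra.
  - rewrite Hk in H1. rewrite Rmult_1_l, cos_PI in H1. lra.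
  - rewrite Hk in H1. replace (IZR (-1) * PI) with (- PI) in H1 by (simpl; ring).
    rewrite cos_neg, cos_PI in H1. lra.
Qed.

Definition scl (c : R) (z : R * R) : R * R := (c * fst z, c * snd z).

Lemma arg_sum z1 z2 z3 z4 c1 c2 :
  0 < fst z1 -> 0 < fst z2 -> 0 < fst z3 -> 0 < fst z4 -> 0 < c1 -> 0 < c2 ->
  scl c1 (cm z1 z2) = scl c2 (cm z3 z4) -> th z1 + th z2 = th z3 + th z4.
Proof.
  destruct z1 as [x1 y1], z2 as [x2 y2], z3 as [x3 y3], z4 as [x4 y4].
  unfold th, scl, cm; simpl. intros H1 H2 H3 H4 Hc1 Hc2 Heq.
  injection Heq as Ea Eb.
  destruct (th_cs x1 y1 H1) as [C1 S1]. destruct (th_cs x2 y2 H2) as [C2 S2].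
  destruct (th_cs x3 y3 H3) as [C3 S3]. destruct (th_cs x4 y4 H4) as [C4 S4].
  set (t1 := atan (y1 / x1)) in *. set (t2 := atan (y2 / x2)) in *.
  set (t3 := atan (y3 / x3)) in *. set (t4 := atan (y4 / x4)) in *.
  set (r1 := sqrt (x1 * x1 + y1 * y1)) in *. set (r2 := sqrt (x2 * x2 + y2 * y2)) in *.
  set (r3 := sqrt (x3 * x3 + y3 * y3)) in *. set (r4 := sqrt (x4 * x4 + y4 * y4)) in *.
  assert (0 < r1) by (apply sqrt_lt_R0; nra). assert (0 < r2) by (apply sqrt_lt_R0; nra).
  assert (0 < r3) by (apply sqrt_lt_R0; nra). assert (0 < r4) by (apply sqrt_lt_R0; nra).
  set (K1 := c1 * (r1 * r2)). set (K2 := c2 * (r3 * r4)).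
  assert (0 < K1) by (unfold K1; apply Rmult_lt_0_compat; auto; apply Rmult_lt_0_compat; auto).
  assert (0 < K2) by (unfold K2; apply Rmult_lt_0_compat; auto; apply Rmult_lt_0_compat; auto).
  assert (CA : cos (t1 + t2) * K1 = cos (t3 + t4) * K2).
  { unfold K1, K2. rewrite !cos_plus.
    replace ((cos t1 * cos t2 - sin t1 * sin t2) * (c1 * (r1 * r2))) with
      (c1 * ((cos t1 * r1) * (cos t2 * r2) - (sin t1 * r1) * (sin t2 * r2))) by ring.
    replace ((cos t3 * cos t4 - sin t3 * sin t4) * (c2 * (r3 * r4))) with
      (c2 * ((cos t3 * r3) * (cos t4 * r4) - (sin t3 * r3) * (sin t4 * r4))) by ring.
    rewrite C1, C2, C3, C4, S1, S2, S3, S4. exact Ea. }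
  assert (SA : sin (t1 + t2) * K1 = sin (t3 + t4) * K2).
  { unfold K1, K2. rewrite !sin_plus.
    replace ((sin t1 * cos t2 + cos t1 * sin t2) * (c1 * (r1 * r2))) with
      (c1 * ((cos t1 * r1) * (sin t2 * r2) + (sin t1 * r1) * (cos t2 * r2))) by ring.
    replace ((sin t3 * cos t4 + cos t3 * sin t4) * (c2 * (r3 * r4))) with
      (c2 * ((cos t3 * r3) * (sin t4 * r4) + (sin t3 * r3) * (cos t4 * r4))) by ring.
    rewrite C1, C2, C3, C4, S1, S2, S3, S4. exact Eb. }
  assert (K1 = K2) as EK.
  { pose proof (sin2_cos2 (t1 + t2)) as P1. pose proof (sin2_cos2 (t3 + t4)) as P2. unfold Rsqr in P1, P2.
    assert (K1 * K1 = K2 * K2).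
    { transitivity ((sin (t1 + t2) * K1) * (sin (t1 + t2) * K1) + (cos (t1 + t2) * K1) * (cos (t1 + t2) * K1)).
      - transitivity (K1 * K1 * (sin (t1 + t2) * sin (t1 + t2) + cos (t1 + t2) * cos (t1 + t2))).
        rewrite P1; ring. ring.
      - rewrite SA, CA.
        transitivity (K2 * K2 * (sin (t3 + t4) * sin (t3 + t4) + cos (t3 + t4) * cos (t3 + t4))).
        ring. rewrite P2; ring. }
    nra. }
  rewrite EK in CA, SA.
  apply angle_unique.
  - pose proof (atan_bound (y1 / x1)). pose proof (atan_bound (y2 / x2)). unfold t1, t2. lra.
  - pose proof (atan_bound (y3 / x3)). pose proof (atan_bound (y4 / x4)). unfold t3, t4. lra.
  - apply (Rmult_eq_reg_r K2); auto; lra.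
  - apply (Rmult_eq_reg_r K2); auto; lra.
Qed.

Lemma cplx_id A B C P Q T :
  scl (n2 Q) (cm (cm P (cc (cm A B))) (cm T (cc (cm P C)))) =
  scl (n2 P) (cm (cm Q (cc (cm B C))) (cm T (cc (cm A Q)))).
Proof.
  destruct A, B, C, P, Q, T. unfold scl, cm, cc, n2; simpl.
  apply injective_projections; simpl; ring.
Qed.

Lemma cocycle x y z : det x = 1 -> det y = 1 -> det z = 1 ->
  om x y + om (vmul x y) z = om y z + om x (vmul y z).
Proof.
  intros Hx Hy Hz.
  assert (Hxy : det (vmul x y) = 1) by (rewrite det_mul, Hx, Hy; ring).
  assert (Hyz : det (vmul y z) = 1) by (rewrite det_mul, Hy, Hz; ring).
  unfold om. apply (arg_sum _ _ _ _ (n2 (al (vmul y z))) (n2 (al (vmul x y)))).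
  - apply Pc_pos; auto.
  - apply Pc_pos; auto.
  - apply Pc_pos; auto.
  - apply Pc_pos; auto.
  - pose proof (det_al_pos _ Hyz). lra.
  - pose proof (det_al_pos _ Hxy). lra.
  - unfold Pc. rewrite <- vmul_assoc. apply cplx_id.
Qed.

Record EE := mkE { ev : V4; et : R; Hdet : det (ev) = 1; Hisn : isn (ev) }.

Lemma EE_eq (x y : EE) : ev x = ev y -> et x = et y -> x = y.
Proof.
  destruct x as [v t d i], y as [v' t' d' i']; simpl; intros; subst.
  f_equal; apply proof_irrelevance.
Qed.

Lemma nrm_det w : 1 <= n2 (al w) -> det (nrm w) = det w.
Proof. intro H. destruct (nrm_spec w H) as [_ [E|E]]; rewrite E; auto. apply det_neg. Qed.

Lemma det1_n2 w : det w = 1 -> 1 <= n2 (al w).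
Proof. apply det_al_pos. Qed.

Lemma nrm_det1 w : det w = 1 -> det (nrm w) = 1.
Proof. intro H. rewrite nrm_det; auto. apply det1_n2; auto. Qed.

Lemma nrm_isn w : det w = 1 -> isn (nrm w).
Proof. intro H. apply (nrm_spec w (det1_n2 w H)). Qed.

Lemma det_vmul1 v w : det v = 1 -> det w = 1 -> det (vmul v w) = 1.
Proof. intros. rewrite det_mul. rewrite H, H0. ring. Qed.

Definition emul (x y : EE) : EE :=
  mkE (nrm (vmul (ev x) (ev y))) (et x + et y + om (ev x) (ev y))
      (nrm_det1 _ (det_vmul1 _ _ (Hdet x) (Hdet y)))
      (nrm_isn _ (det_vmul1 _ _ (Hdet x) (Hdet y))).

Lemma det_vinv1 v : det v = 1 -> det (vinv v) = 1.
Proof. intro. rewrite det_inv; auto. Qed.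

Definition einv (x : EE) : EE :=
  mkE (nrm (vinv (ev x))) (- et x) (nrm_det1 _ (det_vinv1 _ (Hdet x))) (nrm_isn _ (det_vinv1 _ (Hdet x))).

Lemma det_one : det vone = 1.
Proof. unfold det, vone, n2; simpl; ring. Qed.
Lemma isn_one : isn vone.
Proof. left; simpl; lra. Qed.

Definition eone : EE := mkE vone 0 det_one isn_one.

Lemma nrm_mul_r v w : det v = 1 -> det w = 1 -> nrm (vmul v (nrm w)) = nrm (vmul v w).
Proof.
  intros Hv Hw. destruct (nrm_spec w (det1_n2 w Hw)) as [_ [E|E]]; rewrite E; auto.
  rewrite vmul_neg_r. apply nrm_neg. apply det1_n2. apply det_vmul1; auto.
Qed.
Lemma nrm_mul_l v w : det v = 1 -> det w = 1 -> nrm (vmul (nrm v) w) = nrm (vmul v w).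
Proof.
  intros Hv Hw. destruct (nrm_spec v (det1_n2 v Hv)) as [_ [E|E]]; rewrite E; auto.
  rewrite vmul_neg_l. apply nrm_neg. apply det1_n2. apply det_vmul1; auto.
Qed.

Lemma om_real v w : snd (Pc v w) = 0 -> om v w = 0.
Proof. intro H. unfold om. rewrite H. unfold Rdiv. rewrite Rmult_0_l. apply atan_0. Qed.

Lemma om_one_l v : om vone v = 0.
Proof. apply om_real. unfold Pc. rewrite vmul_one_l. destruct v as [[a b] [c d]]. unfold cm, cc, vone; simpl. ring. Qed.
Lemma om_one_r v : om v vone = 0.
Proof. apply om_real. unfold Pc. rewrite vmul_one_r. destruct v as [[a b] [c d]]. unfold cm, cc, vone; simpl. ring. Qed.
Lemma om_inv_l v : det v = 1 -> om (vinv v) v = 0.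
Proof. intro H. apply om_real. unfold Pc. rewrite vmul_inv_l by auto. destruct v as [[a b] [c d]]. unfold cm, cc, vinv, vone; simpl. ring. Qed.
Lemma om_inv_r v : det v = 1 -> om v (vinv v) = 0.
Proof. intro H. apply om_real. unfold Pc. rewrite vmul_inv_r by auto. destruct v as [[a b] [c d]]. unfold cm, cc, vinv, vone; simpl. ring. Qed.

Definition EG : Group.
Proof.
  refine (Build_Group EE emul einv eone _ _ _ _ _).
  - intros x y z. destruct x as [X tx Dx Ix], y as [Y ty Dy Iy], z as [Z tz Dz Iz].
    apply EE_eq; simpl.
    + rewrite nrm_mul_r, nrm_mul_l, vmul_assoc; auto using det_vmul1.
    + rewrite om_nrm_r, om_nrm_l by (apply det1_n2, det_vmul1; auto).
      pose proof (cocycle X Y Z Dx Dy Dz). lra.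
  - intros x. destruct x as [X tx Dx Ix]. apply EE_eq; simpl.
    + rewrite vmul_one_l. apply nrm_id; auto.
    + rewrite om_one_l. ring.
  - intros x. destruct x as [X tx Dx Ix]. apply EE_eq; simpl.
    + rewrite vmul_one_r. apply nrm_id; auto.
    + rewrite om_one_r. ring.
  - intros x. destruct x as [X tx Dx Ix]. apply EE_eq; simpl.
    + rewrite nrm_mul_l by (auto using det_vinv1). rewrite vmul_inv_l by auto. apply nrm_id, isn_one.
    + rewrite om_nrm_l by (apply det1_n2, det_vinv1; auto). rewrite om_inv_l by auto. ring.
  - intros x. destruct x as [X tx Dx Ix]. apply EE_eq; simpl.
    + rewrite nrm_mul_r by (auto using det_vinv1). rewrite vmul_inv_r by auto. apply nrm_id, isn_one.
    + rewrite om_nrm_r by (apply det1_n2, det_vinv1; auto). rewrite om_inv_r by auto. ring.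
Defined.

Definition ephi (x : EG) : R := et x.

Lemma ephi_q : forall g h : EG, Rabs (ephi g + ephi h - ephi (gmul EG g h)) <= PI / 2.
Proof.
  intros g h. unfold ephi. simpl.
  replace (et g + et h - (et g + et h + om (ev g) (ev h))) with (- om (ev g) (ev h)) by ring.
  rewrite Rabs_Ropp. unfold om. pose proof (atan_bound (snd (Pc (ev g) (ev h)) / fst (Pc (ev g) (ev h)))).
  apply Rabs_le. lra.
Qed.

Definition amul (tau : R) (u v : R * R) : R * R :=
  (fst u * fst v - snd u * snd v, fst u * snd v + snd u * fst v + 2 * tau * snd u * snd v).
Fixpoint apow (tau : R) (u : R * R) (k : nat) : R * R :=
  match k with O => (1, 0) | S k => amul tau u (apow tau u k) end.

Definition anorm tau (u : R * R) := fst u * fst u + 2 * tau * fst u * snd u + snd u * snd u.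

Definition rmap (r : R) (u : R * R) : R := fst u + snd u * r.
Lemma rmap_mul tau r u v : r * r = 2 * tau * r - 1 -> rmap r (amul tau u v) = rmap r u * rmap r v.
Proof.
  intro H. destruct u as [x y], v as [x' y']. unfold rmap, amul; simpl.
  transitivity (x * x' + (x * y' + y * x') * r + y * y' * (2 * tau * r - 1)). ring.
  rewrite <- H. ring.
Qed.
Lemma rmap_pow tau r u k : r * r = 2 * tau * r - 1 -> rmap r (apow tau u k) = rmap r u ^ k.
Proof.
  intro H. induction k; simpl. unfold rmap; simpl; ring. rewrite rmap_mul, IHk; auto.
Qed.

Definition cmap (c s : R) (u : R * R) : R * R := (fst u + snd u * c, snd u * s).
Lemma cmap_mul c s u v : c * c + s * s = 1 -> cmap c s (amul c u v) = cm (cmap c s u) (cmap c s v).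
Proof.
  intro H. destruct u as [x y], v as [x' y']. unfold cmap, amul, cm; simpl.
  apply injective_projections; simpl; [|ring].
  transitivity (x * x' + (x * y' + y * x') * c + y * y' * (2 * c * c - (c * c + s * s))).
  rewrite H. ring. ring.
Qed.
Fixpoint cpow (z : R * R) (k : nat) : R * R := match k with O => (1, 0) | S k => cm z (cpow z k) end.
Lemma cmap_pow c s u k : c * c + s * s = 1 -> cmap c s (apow c u k) = cpow (cmap c s u) k.
Proof.
  intro H. induction k; simpl. unfold cmap; simpl; apply injective_projections; simpl; ring.
  rewrite cmap_mul, IHk; auto.
Qed.
Lemma demoivre a k : cpow (cos a, sin a) k = (cos (INR k * a), sin (INR k * a)).
Proof.
  induction k; cbn [cpow]. simpl INR. rewrite Rmult_0_l, cos_0, sin_0. reflexivity.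
  rewrite IHk. replace (INR (S k) * a) with (a + INR k * a) by (rewrite S_INR; ring). unfold cm; simpl fst; simpl snd.
  rewrite cos_plus, sin_plus. apply injective_projections; simpl; ring.
Qed.

Lemma alg_root tau N : 0 <= tau ->
  exists u, anorm tau u = 1 /\ apow tau u (S N) = (0, 1).
Proof.
  intro Ht. set (n := INR (S N)). assert (Hn : 1 <= n) by (unfold n; rewrite S_INR; pose proof (pos_INR N); lra).
  destruct (Rlt_le_dec tau 1) as [H1|H1].
  -
    set (th := acos tau). set (c := cos th). set (s := sin th).
    assert (Hc : c = tau) by (unfold c, th; apply cos_acos; lra).
    assert (Hs : s = sqrt (1 - tau²)) by (unfold s, th; apply sin_acos; lra).
    assert (Hs0 : 0 < s) by (rewrite Hs; apply sqrt_lt_R0; unfold Rsqr; nra).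
    assert (Hcs : c * c + s * s = 1) by (pose proof (sin2_cos2 th); unfold Rsqr in *; unfold c, s; lra).
    set (ph := th / n).
    exists (sin (th - ph) / s, sin ph / s).
    assert (Hm : cmap c s (sin (th - ph) / s, sin ph / s) = (cos ph, sin ph)).
    { unfold cmap; simpl. rewrite sin_minus. fold c s. apply injective_projections; simpl; field; lra. }
    split.
    + unfold anorm; simpl. rewrite <- Hc.
      transitivity (fst (cmap c s (sin (th - ph) / s, sin ph / s)) * fst (cmap c s (sin (th - ph) / s, sin ph / s))
                    + snd (cmap c s (sin (th - ph) / s, sin ph / s)) * snd (cmap c s (sin (th - ph) / s, sin ph / s))).
      * unfold cmap; simpl. transitivity (
          (sin (th - ph) / s) * (sin (th - ph) / s) + 2 * c * (sin (th - ph) / s) * (sin ph / s)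
          + (sin ph / s) * (sin ph / s) * (c * c + s * s)). rewrite Hcs; ring. ring.
      * rewrite Hm. simpl. pose proof (sin2_cos2 ph). unfold Rsqr in H. lra.
    + set (u := (sin (th - ph) / s, sin ph / s)) in *.
      assert (E : cmap c s (apow tau u (S N)) = cmap c s (0, 1)).
      { rewrite <- Hc, cmap_pow by auto. rewrite Hm, demoivre. fold n. unfold ph.
        replace (n * (th / n)) with th by (field; lra). unfold cmap; simpl. fold c s.
        apply injective_projections; simpl; ring. }
      destruct (apow tau u (S N)) as [p q]. unfold cmap in E; simpl in E.
      injection E as E1 E2.
      assert (q = 1) by (apply (Rmult_eq_reg_r s); lra). subst q. f_equal. lra.
  - destruct (Req_dec tau 1) as [Ht1|Ht1].
    +
      subst tau. exists (1 - 1 / n, 1 / n). split.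
      * unfold anorm; simpl. field. lra.
      * assert (forall k, apow 1 (1 - 1 / n, 1 / n) k = (1 - INR k / n, INR k / n)) as Hk.
        { induction k; cbn [apow]. simpl INR. apply injective_projections; simpl; field; lra.
          rewrite IHk. rewrite S_INR. unfold amul; apply injective_projections; simpl fst; simpl snd; field; lra. }
        rewrite Hk. fold n. apply injective_projections; simpl; field; lra.
    +
      assert (Ht2 : 1 < tau) by lra.
      set (q := sqrt (tau * tau - 1)).
      assert (Hq : 0 < q) by (apply sqrt_lt_R0; nra).
      assert (Hq2 : q * q = tau * tau - 1) by (apply sqrt_sqrt; nra).
      set (l := tau + q). set (l' := tau - q).
      assert (Hl : 1 < l) by (unfold l; lra).
      assert (Hll : l * l' = 1) by (unfold l, l'; nra).
      assert (R1 : l * l = 2 * tau * l - 1) by (unfold l; nra).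
      assert (R2 : l' * l' = 2 * tau * l' - 1) by (unfold l'; nra).
      set (mu := Rpower l (/ n)).
      assert (Hmu : 0 < mu) by (unfold mu, Rpower; apply exp_pos).
      assert (HmuN : mu ^ S N = l).
      { rewrite <- Rpower_pow by auto. unfold mu. rewrite Rpower_mult. fold n.
        replace (/ n * n) with 1 by (field; lra). apply Rpower_1. lra. }
      set (y := (mu - / mu) / (l - l')). set (x := mu - y * l).
      assert (Hd : 0 < l - l') by (unfold l, l'; lra).
      assert (M1 : rmap l (x, y) = mu) by (unfold rmap, x; simpl; ring).
      assert (M2 : rmap l' (x, y) = / mu).
      { unfold rmap, x, y; simpl. field. split; lra. }
      exists (x, y). split.
      * unfold anorm; simpl.
        transitivity (rmap l (x, y) * rmap l' (x, y)).
        unfold rmap; simpl. transitivity (x * x + x * y * (l + l') + y * y * (l * l')).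
        rewrite Hll. unfold l, l'. ring. ring.
        rewrite M1, M2. field. lra.
      * assert (E1 : rmap l (apow tau (x, y) (S N)) = l) by (rewrite rmap_pow, M1; auto).
        assert (E2 : rmap l' (apow tau (x, y) (S N)) = l').
        { rewrite rmap_pow, M2 by auto. rewrite <- Rinv_pow by lra. rewrite HmuN.
          apply (Rmult_eq_reg_l l); [|lra]. rewrite Hll. field. lra. }
        destruct (apow tau (x, y) (S N)) as [p r]. unfold rmap in E1, E2; simpl in E1, E2.
        assert (r = 1).
        { apply (Rmult_eq_reg_r (l - l')); [|lra]. lra. }
        subst r. f_equal. lra.
Qed.

Fixpoint vpow (g : V4) (k : nat) : V4 := match k with O => vone | S k => vmul g (vpow g k) end.

Lemma det_vpow g k : det g = 1 -> det (vpow g k) = 1.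
Proof. intro H. induction k; simpl. apply det_one. apply det_vmul1; auto. Qed.

Lemma EG_pow_ev (e : EG) k : ev (gpow_nat EG e k) = nrm (vpow (ev e) k).
Proof.
  induction k; simpl. symmetry; apply nrm_id, isn_one.
  rewrite IHk. apply nrm_mul_r. apply Hdet. apply det_vpow, Hdet.
Qed.

Lemma EG_pow_et g t t' Dg Ig k :
  et (gpow_nat EG (mkE g t Dg Ig) k) = INR k * (t - t') + et (gpow_nat EG (mkE g t' Dg Ig) k).
Proof.
  induction k. simpl. ring.
  change (et (emul (mkE g t Dg Ig) (gpow_nat EG (mkE g t Dg Ig) k)) =
          INR (S k) * (t - t') + et (emul (mkE g t' Dg Ig) (gpow_nat EG (mkE g t' Dg Ig) k))).
  unfold emul; cbn [et ev]. rewrite IHk, S_INR.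
  rewrite (EG_pow_ev (mkE g t Dg Ig)), (EG_pow_ev (mkE g t' Dg Ig)). simpl. ring.
Qed.

Definition lin (x y : R) (h : V4) : V4 :=
  mkV (x + y * fst (al h), y * snd (al h)) (y * fst (be h), y * snd (be h)).

Lemma lin_mul x y x' y' h :
  vmul (lin x y h) (lin x' y' h) =
  lin (x * x' - det h * y * y') (x * y' + y * x' + 2 * fst (al h) * y * y') h.
Proof.
  destruct h as [[a b] [c d]]. unfold lin, vmul, det, n2, cm, ca, cc; simpl.
  apply (f_equal2 mkV); apply injective_projections; simpl; ring.
Qed.

Lemma lin_pow x y h k : det h = 1 ->
  vpow (lin x y h) k = lin (fst (apow (fst (al h)) (x, y) k)) (snd (apow (fst (al h)) (x, y) k)) h.
Proof.
  intro H. induction k; simpl.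
  - destruct h as [[a b] [c d]]. unfold lin, vone; simpl.
    apply (f_equal2 mkV); apply injective_projections; simpl; ring.
  - rewrite IHk, lin_mul, H. unfold amul; simpl. f_equal; ring.
Qed.

Lemma det_lin x y h : det h = 1 -> det (lin x y h) = anorm (fst (al h)) (x, y).
Proof.
  destruct h as [[a b] [c d]]. unfold lin, det, n2, anorm; simpl. intro H. nra.
Qed.

Lemma lin_01 h : lin 0 1 h = h.
Proof.
  destruct h as [[a b] [c d]]. unfold lin; simpl.
  apply (f_equal2 mkV); apply injective_projections; simpl; ring.
Qed.

Lemma vpow_neg g k : vpow (vneg g) k = vpow g k \/ vpow (vneg g) k = vneg (vpow g k).
Proof.
  induction k; simpl. left; auto.
  destruct IHk as [E|E]; rewrite E, vmul_neg_l.
  - right; auto.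
  - left. rewrite vmul_neg_r, vneg_neg. auto.
Qed.

Lemma nrm_vpow_nrm g k : det g = 1 -> nrm (vpow (nrm g) k) = nrm (vpow g k).
Proof.
  intro H. destruct (nrm_spec g (det1_n2 g H)) as [_ [E|E]]; rewrite E; auto.
  apply nrm_neg_eq. apply det1_n2, det_vpow; auto. apply vpow_neg.
Qed.

Lemma EG_divisible : divisible EG.
Proof.
  intros y N. destruct y as [h s Dh Ih].
  assert (Ht : 0 <= fst (al h)) by (destruct Ih as [I|[I _]]; lra).
  destruct (alg_root _ N Ht) as [[x0 y0] [Hn Hp]].
  set (g0 := lin x0 y0 h).
  assert (Dg0 : det g0 = 1) by (unfold g0; rewrite det_lin; auto).
  set (g := nrm g0).
  assert (Dg : det g = 1) by (apply nrm_det1; auto).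
  assert (Ig : isn g) by (apply nrm_isn; auto).
  assert (Hev : forall t, ev (gpow_nat EG (mkE g t Dg Ig) (S N)) = h).
  { intro t. rewrite EG_pow_ev. simpl ev. unfold g. rewrite nrm_vpow_nrm by auto.
    unfold g0. rewrite lin_pow by auto. rewrite Hp. simpl. rewrite lin_01. apply nrm_id; auto. }
  set (c := et (gpow_nat EG (mkE g 0 Dg Ig) (S N))).
  assert (Hpos : 0 < INR (S N)) by (apply lt_0_INR; lia).
  exists (mkE g ((s - c) / INR (S N)) Dg Ig). apply EE_eq.
  - rewrite Hev. reflexivity.
  - rewrite (EG_pow_et g _ 0). fold c. simpl et. field. lra.
Qed.

Definition Fam (b : R * R) (v : V4) : Prop :=
  snd (al v) = 0 /\ 0 < fst (al v) /\ exists s, be v = (s * fst b, s * snd b).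

Lemma Fam_mul b v w : det v = 1 -> det w = 1 -> Fam b v -> Fam b w ->
  Fam b (nrm (vmul v w)) /\ om v w = 0.
Proof.
  intros Dv Dw [Hv2 [Hv1 [s Hs]]] [Hw2 [Hw1 [s' Hs']]].
  destruct v as [[a a2] [c1 c2]], w as [[a' a2'] [d1 d2]]. simpl in *. subst a2 a2'.
  injection Hs as -> ->. injection Hs' as -> ->.
  unfold det, n2 in Dv, Dw. simpl in Dv, Dw.
  set (B := fst b * fst b + snd b * snd b) in *.
  assert (HB : 0 <= B) by (unfold B; nra).
  assert (Hpos : 0 < a * a' + s * s' * B).
  { assert (E1 : a * a = 1 + s * s * B).
    { apply Rminus_diag_uniq. rewrite <- Dv. unfold B. ring. }
    assert (E2 : a' * a' = 1 + s' * s' * B).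
    { apply Rminus_diag_uniq. rewrite <- Dw. unfold B. ring. }
    assert ((a * a') * (a * a') > (s * s' * B) * (s * s' * B)).
    { replace ((a * a') * (a * a')) with ((a * a) * (a' * a')) by ring. rewrite E1, E2. nra. }
    assert (0 < a * a') by (apply Rmult_lt_0_compat; auto).
    set (X := a * a') in *. set (Y := s * s' * B) in *.
    destruct (Rle_lt_dec 0 Y). lra.
    apply Rnot_le_lt. intro HH. assert (0 <= (- Y - X) * (X - Y)) by (apply Rmult_le_pos; lra). nra. }
  assert (Hm : vmul (mkV (a, 0) (s * fst b, s * snd b)) (mkV (a', 0) (s' * fst b, s' * snd b)) =
               mkV (a * a' + s * s' * B, 0) ((a * s' + s * a') * fst b, (a * s' + s * a') * snd b)).
  { unfold vmul, cm, ca, cc; simpl. unfold B.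
    apply (f_equal2 mkV); apply injective_projections; simpl; ring. }
  split.
  - rewrite Hm. rewrite nrm_id by (left; simpl; auto). split; simpl; auto. split; auto.
    exists (a * s' + s * a'). reflexivity.
  - apply om_real. unfold Pc. rewrite Hm. unfold cm, cc; simpl. ring.
Qed.

Lemma Fam_pow b (e : EG) k : Fam b (ev e) -> et e = 0 ->
  Fam b (ev (gpow_nat EG e k)) /\ et (gpow_nat EG e k) = 0.
Proof.
  intros HF Ht. induction k.
  - simpl. split; [|reflexivity]. split; simpl; auto. split. lra. exists 0. f_equal; ring.
  - destruct IHk as [IH1 IH2].
    change (gpow_nat EG e (S k)) with (emul e (gpow_nat EG e k)).
    destruct (Fam_mul b (ev e) (ev (gpow_nat EG e k)) (Hdet _) (Hdet _) HF IH1) as [F1 F2].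
    unfold emul; simpl. split; auto. rewrite Ht, IH2, F2. ring.
Qed.

Lemma hq_Fam b (e : EG) : Fam b (ev e) -> et e = 0 -> hq EG ephi (PI / 2) ephi_q e = 0.
Proof.
  intros HF Ht. apply hq_const. intro n. unfold ephi. rewrite (proj2 (Fam_pow b e n HF Ht)). ring.
Qed.

Definition Diag (v : V4) : Prop := be v = (0, 0).

Lemma Diag_mul v w : Diag v -> Diag w -> Diag (nrm (vmul v w)) /\ om v w = 0.
Proof.
  destruct v as [[a1 a2] bv], w as [[c1 c2] bw]. unfold Diag; simpl. intros -> ->.
  assert (Hm : vmul (mkV (a1, a2) (0, 0)) (mkV (c1, c2) (0, 0)) = mkV (cm (a1, a2) (c1, c2)) (0, 0)).
  { unfold vmul, cm, ca, cc; simpl. apply (f_equal2 mkV); apply injective_projections; simpl; ring. }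
  split.
  - rewrite Hm. unfold nrm. repeat destruct Rlt_dec; simpl; auto.
    all: unfold cn; simpl; f_equal; ring.
  - apply om_real. unfold Pc. rewrite Hm. unfold cm, cc; simpl. ring.
Qed.

Lemma Diag_pow (e : EG) k : Diag (ev e) ->
  Diag (ev (gpow_nat EG e k)) /\ et (gpow_nat EG e k) = INR k * et e.
Proof.
  intros HD. induction k.
  - simpl. split; [reflexivity|ring].
  - destruct IHk as [IH1 IH2].
    change (gpow_nat EG e (S k)) with (emul e (gpow_nat EG e k)).
    destruct (Diag_mul (ev e) (ev (gpow_nat EG e k)) HD IH1) as [F1 F2].
    unfold emul; cbn [et ev]. split; auto. rewrite IH2, F2, S_INR. ring.
Qed.

Lemma hq_Diag (e : EG) : Diag (ev e) -> hq EG ephi (PI / 2) ephi_q e = et e.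
Proof.
  intros HD. apply hq_const. intro n. unfold ephi. apply (proj2 (Diag_pow e n HD)).
Qed.

Definition v1 : V4 := mkV (5/4, 0) (3/4, 0).
Definition v2 : V4 := mkV (5/4, 0) (0, 3/4).
Lemma D_v1 : det v1 = 1. Proof. unfold det, n2, v1; simpl. field. Qed.
Lemma D_v2 : det v2 = 1. Proof. unfold det, n2, v2; simpl. field. Qed.
Lemma I_v1 : isn v1. Proof. left; simpl; lra. Qed.
Lemma I_v2 : isn v2. Proof. left; simpl; lra. Qed.
Definition e1 : EG := mkE v1 0 D_v1 I_v1.
Definition e2 : EG := mkE v2 0 D_v2 I_v2.

Definition v12 := vmul v1 v2.
Lemma al_v12 : al v12 = (25/16, -9/16).
Proof. unfold v12, vmul, v1, v2, cm, ca, cc; simpl. apply injective_projections; simpl; field. Qed.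
Lemma D_v12 : det v12 = 1. Proof. unfold v12. apply det_vmul1; [apply D_v1|apply D_v2]. Qed.
Lemma I_v12 : isn v12. Proof. left. rewrite al_v12. simpl. lra. Qed.

Definition rr := sqrt (n2 (al v12)).
Lemma rr_pos : 0 < rr.
Proof. unfold rr. apply sqrt_lt_R0. rewrite al_v12. unfold n2; simpl. lra. Qed.
Lemma rr_sq : rr * rr = n2 (al v12).
Proof. unfold rr. apply sqrt_sqrt. apply n2_nonneg. Qed.

Definition b3 : R * R := cn (scl (/ rr) (cm (be v12) (cc (al v12)))).
Definition v3 : V4 := mkV (rr, 0) b3.

Lemma D_v3 : det v3 = 1.
Proof.
  pose proof D_v12 as H. pose proof rr_pos. pose proof rr_sq as Hs.
  unfold v3, b3, det in *. destruct v12 as [[a1 a2] [c1 c2]]. unfold n2, cn, scl, cm, cc in *; simpl in *.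
  rewrite <- H. transitivity (rr * rr - (c1 * c1 + c2 * c2) * (a1 * a1 + a2 * a2) / (rr * rr)).
  field. lra. rewrite Hs. field. rewrite <- Hs. nra.
Qed.
Lemma I_v3 : isn v3. Proof. left. simpl. apply rr_pos. Qed.
Definition e3 : EG := mkE v3 0 D_v3 I_v3.

Lemma be_v12_v3 : be (vmul v12 v3) = (0, 0).
Proof.
  pose proof rr_pos. pose proof rr_sq as Hs.
  unfold v3, b3 in *. destruct v12 as [[a1 a2] [c1 c2]]. unfold vmul, n2, cn, scl, cm, ca, cc in *; simpl in *.
  apply injective_projections; simpl.
  - transitivity (c1 * (rr * rr - (a1 * a1 + a2 * a2)) / rr). field. lra. rewrite Hs. field. lra.
  - transitivity (c2 * (rr * rr - (a1 * a1 + a2 * a2)) / rr). field. lra. rewrite Hs. field. lra.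
Qed.

Lemma om_v12_v3 : om v12 v3 = 0.
Proof.
  apply om_real. pose proof rr_pos.
  unfold Pc, v3, b3. destruct v12 as [[a1 a2] [c1 c2]]. unfold vmul, cn, scl, cm, ca, cc; simpl.
  field. lra.
Qed.

Lemma om_v1_v2 : om v1 v2 <> 0.
Proof.
  unfold om. assert (Pc v1 v2 = (625/256, -225/256)) as E.
  { unfold Pc. fold v12. rewrite al_v12. unfold v1, v2, cm, cc; simpl.
    apply injective_projections; simpl; field. }
  rewrite E. simpl. intro H. assert (tan (atan (-225 / 256 / (625 / 256))) = tan 0) by (rewrite H; auto).
  rewrite tan_atan, tan_0 in H0. field_simplify in H0. lra.
Qed.

Lemma Fam_e1 : Fam (1, 0) (ev e1).
Proof. unfold Fam, e1, e2, v1, v2; simpl. split; auto. split. lra. exists (3/4). f_equal; ring. Qed.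
Lemma Fam_e2 : Fam (0, 1) (ev e2).
Proof. unfold Fam, e1, e2, v1, v2; simpl. split; auto. split. lra. exists (3/4). f_equal; ring. Qed.
Lemma Fam_e3 : Fam b3 (ev e3).
Proof. unfold Fam, e3, v3; simpl. split; auto. split. apply rr_pos. exists 1. rewrite !Rmult_1_l. apply surjective_pairing. Qed.

Notation hqE := (hq EG ephi (PI / 2) ephi_q).

Lemma hq_e123 : hqE (gmul EG e1 (gmul EG e2 e3)) <> 0.
Proof.
  rewrite gmul_assoc.
  assert (Ev : ev (gmul EG (gmul EG e1 e2) e3) = nrm (vmul v12 v3)).
  { simpl. fold v12. rewrite (nrm_id v12 I_v12). reflexivity. }
  assert (Et : et (gmul EG (gmul EG e1 e2) e3) = om v1 v2).
  { simpl. fold v12. rewrite (nrm_id v12 I_v12). rewrite om_v12_v3. ring. }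
  assert (HD : Diag (ev (gmul EG (gmul EG e1 e2) e3))).
  { rewrite Ev. unfold Diag. unfold nrm. pose proof be_v12_v3.
    repeat destruct Rlt_dec; auto; unfold vneg; cbn [be]; rewrite H; unfold cn; simpl; f_equal; ring. }
  rewrite hq_Diag by auto. rewrite Et. apply om_v1_v2.
Qed.

Theorem theoremA_dev :
  exists G : Group,
    countable_group G /\
    (forall (m : nat) (w : word), (1 <= m)%nat -> word_in m w ->
        ~ in_commutator_subgroup m w -> word_map_surjective G m w) /\
    Q_mod_Hom_infinite_dim G.
Proof.
  apply (final_thm EG ephi (PI / 2) ephi_q EG_divisible e1 e2 e3).
  - apply (hq_Fam (1, 0)). apply Fam_e1. reflexivity.
  - apply (hq_Fam (0, 1)). apply Fam_e2. reflexivity.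
  - apply (hq_Fam b3). apply Fam_e3. reflexivity.
  - apply hq_e123.
Qed.


Theorem theoremA :
  exists G : Group,
    countable_group G /\
    (forall (m : nat) (w : word), (1 <= m)%nat -> word_in m w ->
        ~ in_commutator_subgroup m w -> word_map_surjective G m w) /\
    Q_mod_Hom_infinite_dim G.
Proof. exact theoremA_dev. Qed.
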